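(* Let $\boldsymbol{H}$ be a self-adjoint operator on $L^{2}(\mathbb{Z}_{p})$ defined on the dense subspace $\mathcal{D}(\mathbb{Z}_{p})$, with associated unitary group $e^{-i\boldsymbol{H}t}$, $t\in\mathbb{R}$. Let $\mathcal{N}\subset\mathbb{Z}_{p}$ have Haar measure zero and let $\{\mathcal{K}_{j}\}_{j\in\mathbb{J}}$ ($\mathbb{J}$ countable) be pairwise disjoint open compact subsets of $\mathbb{Z}_p$ with $\mathbb{Z}_{p}\smallsetminus\mathcal{N}=\bigsqcup_{j\in\mathbb{J}}\mathcal{K}_{j}$. Put $e_{v}=c_{v}1_{\mathcal{K}_{v}}$ with $c_v>0$ chosen so that $\|e_v\|_2=1$, and $\pi_{r,v}(t)=|\langle e_{r},e^{-i\boldsymbol{H}t}e_{v}\rangle|^{2}$ for $r,v\in\mathbb{J}$, $t\geq 0$. Assume (H1) $\mathcal{H}_{\mathbb{J}}:=\mathrm{Span}\{e_j;\ j\in\mathbb{J}\}$ is a Hilbert subspace of $L^{2}(\mathbb{Z}_{p})$, and (H2) $e^{-i\boldsymbol{H}t}\mathcal{H}_{\mathbb{J}}\subset\mathcal{H}_{\mathbb{J}}$ for $t\ge 0$. Then $\sum_{r\in\mathbb{J}}\pi_{r,v}(t)=1$ for all $t\geq0$ and every $v\in\mathbb{J}$.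
   Context: $p$ is a fixed prime, $\mathbb{Z}_p$ the $p$-adic integers with Haar measure $dx$ normalized by $\int_{\mathbb{Z}_p}dx=1$, $1_A$ the characteristic function of $A$, and $\langle f,g\rangle=\int_{\mathbb{Z}_p}f\overline{g}\,dx$. $\mathcal{D}(\mathbb{Z}_p)$ is the space of locally constant complex functions supported in $\mathbb{Z}_p$. *)

(* Defs.v *)
From HB Require Import structures.
From mathcomp Require Import all_boot all_order all_algebra.
From mathcomp Require Import all_classical all_reals all_analysis.
From mathcomp Require Import complex.
Set Implicit Arguments. Unset Strict Implicit. Unset Printing Implicit Defensive.
Import Order.TTheory GRing.Theory Num.Theory.
Local Open Scope classical_set_scope.
Local Open Scope ring_scope.
Local Open Scope complex_scope.

(* The p-adic integers Z_p, as a measure/topological space, are modelled by  *)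
(* their p-adic digit expansions x = sum_k x_k p^k, x_k in {0,..,p-1}.       *)
(* (For p prime, p.-1.+1 = p, so 'I_p.-1.+1 is the digit set 'I_p.)          *)
Definition Zpadic (p : nat) : Type := nat -> 'I_p.-1.+1.
HB.instance Definition _ (p : nat) := Choice.on (Zpadic p).
HB.instance Definition _ (p : nat) := isPointed.Build (Zpadic p) (fun _ => ord0).

(* the ball a + p^n Z_p : points whose first n digits agree with those of a *)
Definition Zp_ball (p : nat) (a : Zpadic p) (n : nat) : set (Zpadic p) :=
  [set y | forall k, (k < n)%N -> y k = a k].

Definition Zp_balls (p : nat) : set (set (Zpadic p)) :=
  [set B | exists a n, B = Zp_ball a n].

(* Z_p with its Borel sigma-algebra (generated by the balls, which form a   *)
(* countable basis of the p-adic topology)                                  *)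
Definition ZpM (p : nat) := g_sigma_algebraType (@Zp_balls p).

Definition Zp_open (p : nat) (U : set (Zpadic p)) : Prop :=
  forall x, U x -> exists n, Zp_ball x n `<=` U.

Definition Zp_compact (p : nat) (K : set (Zpadic p)) : Prop :=
  forall (I : Type) (V : I -> set (Zpadic p)), (forall i, Zp_open (V i)) ->
    K `<=` \bigcup_i V i ->
    exists F : set I, finite_set F /\ K `<=` \bigcup_(i in F) V i.

(* Haar measure dx on Z_p, normalized by int_{Z_p} dx = 1: the measure of     *)
(* a + p^n Z_p is p^-n (this determines the measure on the Borel sets).      *)
Definition is_haar (R : realType) (p : nat)
    (mu : {measure set (ZpM p) -> \bar R}) : Prop :=
  forall (a : Zpadic p) (n : nat), mu (Zp_ball a n) = (((p%:R : R)^-1) ^+ n)%:E.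

(* L^2(Z_p) : complex valued square-integrable functions (elements are      *)
(* representatives; equality in L^2 is equality up to null sets, i.e.       *)
(* L2norm (f - g) = 0).                                                     *)
Section L2.
Context (R : realType) (p : nat) (mu : {measure set (ZpM p) -> \bar R}).

Definition sqmod (z : R[i]) : R := complex.Re z ^+ 2 + complex.Im z ^+ 2.

Definition L2 (f : ZpM p -> R[i]) : Prop :=
  measurable_fun setT (fun x => complex.Re (f x)) /\
  measurable_fun setT (fun x => complex.Im (f x)) /\
  (\int[mu]_x (sqmod (f x))%:E < +oo)%E.

Definition L2inner (f g : ZpM p -> R[i]) : R[i] :=
  (Rintegral mu setT (fun x => complex.Re (f x * (g x)^*))) +i*
  (Rintegral mu setT (fun x => complex.Im (f x * (g x)^*))).

Definition L2norm (f : ZpM p -> R[i]) : R :=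
  Num.sqrt (Rintegral mu setT (fun x => sqmod (f x))).

Definition fsub (f g : ZpM p -> R[i]) : ZpM p -> R[i] := fun x => f x - g x.
Definition fadd (f g : ZpM p -> R[i]) : ZpM p -> R[i] := fun x => f x + g x.
Definition fscale (a : R[i]) (f : ZpM p -> R[i]) : ZpM p -> R[i] :=
  fun x => a * f x.

Definition L2eq (f g : ZpM p -> R[i]) : Prop := L2norm (fsub f g) = 0.

(* D(Z_p): locally constant complex functions supported in Z_p *)
Definition locally_constant (f : ZpM p -> R[i]) : Prop :=
  forall x : Zpadic p, exists n, forall y, Zp_ball x n y -> f y = f x.

Definition operator := (ZpM p -> R[i]) -> (ZpM p -> R[i]).

Definition unitary_group (U : R -> operator) : Prop :=
  (forall t f, L2 f -> L2 (U t f)) /\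
  (forall t f g, L2 f -> L2 g -> L2inner (U t f) (U t g) = L2inner f g) /\
  (forall t g, L2 g -> exists2 f, L2 f & L2eq (U t f) g) /\
  (forall t a f g, L2 f -> L2 g ->
      L2eq (U t (fadd (fscale a f) g)) (fadd (fscale a (U t f)) (U t g))) /\
  (forall f, L2 f -> L2eq (U 0 f) f) /\
  (forall s t f, L2 f -> L2eq (U (s + t) f) (U s (U t f))) /\
  (forall f, L2 f -> (fun t => L2norm (fsub (U t f) f)) @ 0^' --> 0).

(* U t = e^{-iHt}, where H is a self-adjoint operator defined on the dense  *)
(* subspace D(Z_p) : by Stone's theorem this means that the self-adjoint    *)
(* generator A of U (i.e. U t = e^{-iAt}, A f = i d/dt U t f |_{t=0})       *)
(* extends H|_D(Z_p) and is its closure (D(Z_p) is a core for A).          *)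
Definition generator_graph (U : R -> operator) (f g : ZpM p -> R[i]) : Prop :=
  L2 f /\ L2 g /\
  (fun t : R => L2norm (fsub (fscale (t^-1)%:C (fsub (U t f) f))
                             (fscale (- 'i) g))) @ 0^' --> 0.

Definition unitary_group_of (H : operator) (U : R -> operator) : Prop :=
  [/\ unitary_group U,
      (forall f, locally_constant f -> generator_graph U f (H f)) &
      (forall f g, generator_graph U f g ->
         exists fn : nat -> (ZpM p -> R[i]),
           [/\ forall n, locally_constant (fn n),
               (fun n => L2norm (fsub (fn n) f)) @ \oo --> 0 &
               (fun n => L2norm (fsub (H (fn n)) g)) @ \oo --> 0])].

Definition closed_span (J : eqType) (e : J -> ZpM p -> R[i])
    (f : ZpM p -> R[i]) : Prop :=
  L2 f /\ forall eps : R, 0 < eps ->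
    exists (s : seq J) (a : J -> R[i]),
      L2norm (fsub f (fun x => \sum_(j <- s) a j * e j x)) < eps.

End L2.

Definition e_fun (R : realType) (p : nat) (J : Type) (c : J -> R)
    (K : J -> set (Zpadic p)) (v : J) : ZpM p -> R[i] :=
  fun x => (c v * \1_(K v) x)%:C.

(* Main.v *)
Require Import Defs.
From HB Require Import structures.
From mathcomp Require Import all_boot all_order all_algebra.
From mathcomp Require Import all_classical all_reals all_analysis.
From mathcomp Require Import complex.
From mathcomp Require Import measurable_realfun.
From mathcomp Require Import ring lra.
Set Implicit Arguments. Unset Strict Implicit. Unset Printing Implicit Defensive.
Import Order.TTheory GRing.Theory Num.Theory.
Local Open Scope classical_set_scope.
Local Open Scope ring_scope.
Local Open Scope complex_scope.
Section Gen.
Variables (R : realType) (p : nat) (mu : {measure set (ZpM p) -> \bar R}).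
Local Notation T := (ZpM p).

Lemma Re_mulc (z w : R[i]) : complex.Re (z * w^*) = complex.Re z * complex.Re w + complex.Im z * complex.Im w.
Proof. by case: z => a b; case: w => c d /=; ring. Qed.
Lemma Im_mulc (z w : R[i]) : complex.Im (z * w^*) = complex.Im z * complex.Re w - complex.Re z * complex.Im w.
Proof. by case: z => a b; case: w => c d /=; ring. Qed.
Lemma sqmod_sub (z w : R[i]) : sqmod (z - w) = sqmod z - 2 * complex.Re (z * w^*) + sqmod w.
Proof. by case: z => a b; case: w => c d; rewrite /sqmod /=; ring. Qed.
Lemma sqmod_ge0 (z : R[i]) : 0 <= sqmod z.
Proof. by rewrite /sqmod addr_ge0 // sqr_ge0. Qed.
Lemma Re_self (z : R[i]) : complex.Re (z * z^*) = sqmod z.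
Proof. by rewrite Re_mulc /sqmod !expr2. Qed.

Lemma mf_sqmod f : L2 mu f -> measurable_fun setT (fun x => sqmod (f x)).
Proof.
case=> mr [mi _]; rewrite /sqmod.
by apply: measurable_funD; apply: measurable_funX.
Qed.

Lemma int_sqmod f : L2 mu f -> mu.-integrable setT (EFin \o (fun x => sqmod (f x))).
Proof.
move=> hf; apply/integrableP; split; first by apply/measurable_EFinP; exact: mf_sqmod.
case: hf => _ [_ h]; apply: le_lt_trans h; rewrite le_eqVlt; apply/orP; left.
apply/eqP; apply: eq_integral => x _ /=; by rewrite ger0_norm // sqmod_ge0.
Qed.

Lemma int_Re f g : L2 mu f -> L2 mu g ->
  mu.-integrable setT (EFin \o (fun x => complex.Re (f x * (g x)^*))).
Proof.
move=> hf hg.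
have mRe : measurable_fun setT (fun x => complex.Re (f x * (g x)^*)).
  under eq_fun do rewrite Re_mulc.
  case: hf => mr [mi _]; case: hg => mr' [mi' _].
  by apply: measurable_funD; apply: measurable_funM.
have hi := integrableD measurableT (int_sqmod hf) (int_sqmod hg).
apply: (le_integrable measurableT _ _ hi).
  exact/measurable_EFinP.
move=> x _ /=; rewrite lee_fin Re_mulc.
rewrite [X in _ <= X]ger0_norm; last by rewrite addr_ge0 ?sqmod_ge0.
rewrite /sqmod ler_norml; set a := complex.Re (f x); set b := complex.Im (f x);
  set c := complex.Re (g x); set d := complex.Im (g x).
have h1 := sqr_ge0 (a - c); have h2 := sqr_ge0 (a + c).
have h3 := sqr_ge0 (b - d); have h4 := sqr_ge0 (b + d).
have h5 := sqr_ge0 (b - c); have h6 := sqr_ge0 (b + c).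
have h7 := sqr_ge0 (a - d); have h8 := sqr_ge0 (a + d).
apply/andP; split; nra.
Qed.

Lemma int_Im f g : L2 mu f -> L2 mu g ->
  mu.-integrable setT (EFin \o (fun x => complex.Im (f x * (g x)^*))).
Proof.
move=> hf hg.
have mIm : measurable_fun setT (fun x => complex.Im (f x * (g x)^*)).
  under eq_fun do rewrite Im_mulc.
  case: hf => mr [mi _]; case: hg => mr' [mi' _].
  by apply: measurable_funB; apply: measurable_funM.
have hi := integrableD measurableT (int_sqmod hf) (int_sqmod hg).
apply: (le_integrable measurableT _ _ hi).
  exact/measurable_EFinP.
move=> x _ /=; rewrite lee_fin Im_mulc.
rewrite [X in _ <= X]ger0_norm; last by rewrite addr_ge0 ?sqmod_ge0.
rewrite /sqmod ler_norml; set a := complex.Re (f x); set b := complex.Im (f x);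
  set c := complex.Re (g x); set d := complex.Im (g x).
have h1 := sqr_ge0 (a - c); have h2 := sqr_ge0 (a + c).
have h3 := sqr_ge0 (b - d); have h4 := sqr_ge0 (b + d).
have h5 := sqr_ge0 (b - c); have h6 := sqr_ge0 (b + c).
have h7 := sqr_ge0 (a - d); have h8 := sqr_ge0 (a + d).
apply/andP; split; nra.
Qed.

Lemma Rintegral_sum (I : Type) (s : seq I) (h : I -> T -> R) :
  (forall i, mu.-integrable setT (EFin \o h i)) ->
  Rintegral mu setT (fun x => \sum_(i <- s) h i x) = \sum_(i <- s) Rintegral mu setT (h i).
Proof.
move=> hi; elim: s => [|i s IH].
  rewrite big_nil; under eq_Rintegral do rewrite big_nil.
  by rewrite /Rintegral integral0.
rewrite big_cons; under eq_Rintegral do rewrite big_cons.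
rewrite RintegralD //; first by rewrite IH.
have := @integrable_sum _ _ _ mu setT measurableT I s xpredT (fun i x => (h i x)%:E) (fun i _ => hi i).
apply: eq_integrable => // x _ /=; by rewrite sumEFin.
Qed.

End Gen.
Section Expand.
Variables (R : realType) (p : nat) (mu : {measure set (ZpM p) -> \bar R}).
Local Notation T := (ZpM p).
Local Notation Rint := (Rintegral mu setT).
Local Notation int f := (mu.-integrable setT (EFin \o f)).

Lemma intZ k (f : T -> R) : int f -> int (fun x => k * f x).
Proof.
move=> hf; have := integrableZl measurableT k hf.
by apply: eq_integrable => // x _ /=; rewrite EFinM.
Qed.
Lemma intD (f g : T -> R) : int f -> int g -> int (fun x => f x + g x).
Proof.
move=> hf hg; have := integrableD measurableT hf hg.
by apply: eq_integrable => // x _ /=; rewrite EFinD.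
Qed.
Lemma intB (f g : T -> R) : int f -> int g -> int (fun x => f x - g x).
Proof.
move=> hf hg; have := integrableB measurableT hf hg.
by apply: eq_integrable => // x _ /=; rewrite EFinB.
Qed.
Lemma intS (I : Type) (s : seq I) (h : I -> T -> R) : (forall i, int (h i)) ->
  int (fun x => \sum_(i <- s) h i x).
Proof.
move=> hi; have := @integrable_sum _ _ _ mu setT measurableT I s xpredT (fun i x => (h i x)%:E) (fun i _ => hi i).
by apply: eq_integrable => // x _ /=; rewrite sumEFin.
Qed.

Lemma Re_mulcD (z u v : R[i]) : complex.Re (z * (u + v)^*) = complex.Re (z * u^*) + complex.Re (z * v^*).
Proof. by case: z => a b; case: u => c d; case: v => g h /=; ring. Qed.
Lemma Re_mulcZ (z a w : R[i]) : complex.Re (z * (a * w)^*) =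
  complex.Re a * complex.Re (z * w^*) + complex.Im a * complex.Im (z * w^*).
Proof. by case: z => x y; case: a => c d; case: w => g h /=; ring. Qed.

Variables (F : T -> R[i]) (hF : L2 mu F) (J : eqType) (e : J -> T -> R[i]).
Hypothesis he : forall j, L2 mu (e j).
Hypothesis hnorm : forall j, Rint (fun x => sqmod (e j x)) = 1.
Hypothesis horth : forall (s : seq J), uniq s -> forall (a : J -> R[i]) x,
  sqmod (\sum_(j <- s) a j * e j x) = \sum_(j <- s) sqmod (a j) * sqmod (e j x).

Definition alpha j := Rint (fun x => complex.Re (F x * (e j x)^*)).
Definition beta j := Rint (fun x => complex.Im (F x * (e j x)^*)).

Lemma expand (s : seq J) (us : uniq s) (a : J -> R[i]) :
  Rint (fun x => sqmod (F x - \sum_(j <- s) a j * e j x)) =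
  Rint (fun x => sqmod (F x))
  - 2 * \sum_(j <- s) (complex.Re (a j) * alpha j + complex.Im (a j) * beta j)
  + \sum_(j <- s) sqmod (a j).
Proof.
have ReS x : complex.Re (F x * (\sum_(j <- s) a j * e j x)^*) =
    \sum_(j <- s) (complex.Re (a j) * complex.Re (F x * (e j x)^*)
                  + complex.Im (a j) * complex.Im (F x * (e j x)^*)).
  elim: s {us} => [|j s IH]; first by rewrite !big_nil; case: (F x) => u v /=; ring.
  by rewrite !big_cons Re_mulcD IH Re_mulcZ.
under eq_Rintegral do rewrite sqmod_sub ReS (horth us).
have iB : int (fun x => \sum_(j <- s) (complex.Re (a j) * complex.Re (F x * (e j x)^*)
                  + complex.Im (a j) * complex.Im (F x * (e j x)^*))).
  by apply: intS => j; apply: intD; apply: intZ; [exact: int_Re | exact: int_Im].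
have iC : int (fun x => \sum_(j <- s) sqmod (a j) * sqmod (e j x)).
  by apply: intS => j; apply: intZ; exact: int_sqmod.
rewrite RintegralD //; last by apply: intB; [exact: int_sqmod | exact: intZ].
rewrite RintegralB //; [|exact: int_sqmod| exact: intZ].
rewrite RintegralZl //.
rewrite (@Rintegral_sum _ _ _ _ s (fun j x => sqmod (a j) * sqmod (e j x))); last first.
  by move=> j; apply: intZ; exact: int_sqmod.
rewrite (@Rintegral_sum _ _ _ _ s); last first.
  by move=> j; apply: intD; apply: intZ; [exact: int_Re | exact: int_Im].
congr (_ - 2 * _ + _); apply: eq_bigr => j _.
  rewrite RintegralD; [|done|exact/intZ/int_Re|exact/intZ/int_Im].
  by rewrite !RintegralZl //; [exact: int_Im | exact: int_Re].
by rewrite RintegralZl ?hnorm ?mulr1 //; exact: int_sqmod.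
Qed.


Lemma key_ineq (s : seq J) (a : J -> R[i]) :
  0 <= \sum_(j <- s) (alpha j ^+ 2 + beta j ^+ 2)
       - 2 * \sum_(j <- s) (complex.Re (a j) * alpha j + complex.Im (a j) * beta j)
       + \sum_(j <- s) sqmod (a j).
Proof.
elim: s => [|j s IH]; first by rewrite !big_nil; lra.
rewrite !big_cons.
have h1 := sqr_ge0 (complex.Re (a j) - alpha j).
have h2 := sqr_ge0 (complex.Im (a j) - beta j).
move: IH h1 h2; rewrite /sqmod.
set A := \sum_(j <- s) _; set B := \sum_(j <- s) _; set C := \sum_(j <- s) _.
nra.
Qed.

Lemma approx (s : seq J) (us : uniq s) (a : J -> R[i]) :
  Rint (fun x => sqmod (F x)) - \sum_(j <- s) (alpha j ^+ 2 + beta j ^+ 2)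
  <= Rint (fun x => sqmod (F x - \sum_(j <- s) a j * e j x)).
Proof. rewrite expand //; have := key_ineq s a; lra. Qed.

Lemma bessel (s : seq J) (us : uniq s) :
  \sum_(j <- s) (alpha j ^+ 2 + beta j ^+ 2) <= Rint (fun x => sqmod (F x)).
Proof.
have h0 : 0 <= Rint (fun x => sqmod (F x - \sum_(j <- s) (alpha j +i* beta j) * e j x)).
  by apply: Rintegral_ge0 => x _; exact: sqmod_ge0.
move: h0; rewrite expand //.
have -> : \sum_(j <- s) (complex.Re (alpha j +i* beta j) * alpha j +
     complex.Im (alpha j +i* beta j) * beta j) = \sum_(j <- s) (alpha j ^+ 2 + beta j ^+ 2).
  by apply: eq_bigr => j _ /=; rewrite !expr2.
lra.
Qed.

End Expand.
Section Specific.
Variables (R : realType) (p : nat) (mu : {measure set (ZpM p) -> \bar R}).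
Local Notation T := (ZpM p).
Local Notation Rint := (Rintegral mu setT).

Lemma ball_meas (x : Zpadic p) n : measurable (Zp_ball x n : set T).
Proof. by apply: sub_sigma_algebra; exists x, n. Qed.

Lemma openK_meas (K : set (Zpadic p)) : Zp_open K -> Zp_compact K -> measurable (K : set T).
Proof.
move=> hO hC.
have [n hn] : {n : Zpadic p -> nat & forall x, K x -> Zp_ball x (n x) `<=` K}.
  apply: (@choice _ _ (fun x m => K x -> Zp_ball x m `<=` K)) => x.
  have [Kx|nKx] := pselect (K x).
    by have [m hm] := hO x Kx; exists m.
  by exists 0%N.
pose V (x : Zpadic p) := [set y | K x /\ Zp_ball x (n x) y].
have VO : forall x, Zp_open (V x).
  move=> x y [Kx bxy]; exists (n x) => z bz; split => // k hk.
  by rewrite bz // bxy.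
have KV : K `<=` \bigcup_x V x.
  by move=> y Ky; exists y => //; split.
have [F [finF KF]] := hC _ V VO KV.
have -> : K = \bigcup_(i in F) V i.
  apply/seteqP; split => // y [i _ [Ki biy]]; exact: hn Ki _ biy.
apply: fin_bigcup_measurable => // i _.
have [Ki|nKi] := pselect (K i).
  have -> : V i = Zp_ball i (n i) by apply/seteqP; split => y; [case|].
  exact: ball_meas.
have -> : V i = set0 by apply/seteqP; split => y // [].
exact: measurable0.
Qed.

End Specific.
Lemma sqmodM (R : realType) (z w : R[i]) : sqmod (z * w) = sqmod z * sqmod w.
Proof. by case: z => a b; case: w => c d; rewrite /sqmod /=; ring. Qed.
Lemma sqmod0 (R : realType) : sqmod (0 : R[i]) = 0.
Proof. by rewrite /sqmod /= expr2 mulr0 addr0. Qed.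

Lemma Re_inner (R : realType) (p : nat) (mu : {measure set (ZpM p) -> \bar R}) f :
  complex.Re (L2inner mu f f) = Rintegral mu setT (fun x => sqmod (f x)).
Proof. by rewrite /L2inner /=; apply: eq_Rintegral => x _; rewrite Re_self. Qed.

Theorem proposition1 (R : realType) (p : nat) (hp : prime p)
  (mu : {measure set (ZpM p) -> \bar R}) (hmu : is_haar mu)
  (H : operator R p) (U : R -> operator R p) (hU : unitary_group_of mu H U)
  (N : set (ZpM p)) (hN : mu.-negligible N)
  (J : countType) (K : J -> set (Zpadic p))
  (hKopen : forall j, Zp_open (K j)) (hKcompact : forall j, Zp_compact (K j))
  (hKdisj : trivIset setT K) (hKcover : ~` N = \bigcup_j K j)
  (c : J -> R) (hcpos : forall j, 0 < c j)
  (hcnorm : forall j, L2norm mu (e_fun c K j) = 1)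
  (H2 : forall t : R, 0 <= t -> forall f,
          closed_span mu (e_fun c K) f -> closed_span mu (e_fun c K) (U t f)) :
  forall (v : J) (t : R), 0 <= t ->
    (\esum_(r in [set: J])
       (sqmod (L2inner mu (e_fun c K r) (U t (e_fun c K v))))%:E = 1)%E.
Proof.
move=> v t ht.
set e := e_fun c K.
have mK j : measurable (K j : set (ZpM p)) := openK_meas (hKopen j) (hKcompact j).
have hsq j : Rintegral mu setT (fun x => sqmod (e j x)) = 1.
  have h := hcnorm j; rewrite /L2norm in h.
  have h0 : 0 <= Rintegral mu setT (fun x => sqmod (e j x)).
    by apply: Rintegral_ge0 => x _; exact: sqmod_ge0.
  by rewrite -(sqr_sqrtr h0) h expr1n.
have he j : L2 mu (e j).
  split; [|split].
  - rewrite /e /e_fun /=; apply: measurable_funM; first exact: measurable_cst.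
    exact: measurable_indic.
  - rewrite /e /e_fun /=; exact: measurable_cst.
  - have := hsq j; rewrite /Rintegral.
    case: (\int[mu]_x (sqmod (e j x))%:E)%E => [r _| |] //=; first exact: ltry.
    by move/eqP; rewrite eq_sym oner_eq0.
have e0 j x : ~ K j x -> e j x = 0.
  by move=> nK; rewrite /e /e_fun indicE memNset // mulr0.
have horth : forall (s : seq J), uniq s -> forall (a : J -> R[i]) x,
    sqmod (\sum_(j <- s) a j * e j x) = \sum_(j <- s) sqmod (a j) * sqmod (e j x).
  move=> s us a x.
  have [[j0 j0s Kx]|nK] := pselect (exists2 j, j \in s & K j x).
    have oth j : j != j0 -> e j x = 0.
      move=> /eqP nj; apply: e0 => Kj; apply: nj; apply: hKdisj => //; by exists x.
    rewrite (bigD1_seq j0) //= [X in sqmod (_ + X)]big1 ?addr0; last first.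
      by move=> j /oth ->; rewrite mulr0.
    rewrite (bigD1_seq j0) //= big1 ?addr0 ?sqmodM //.
    by move=> j /oth ->; rewrite sqmod0 mulr0.
  have z j : j \in s -> e j x = 0.
    by move=> js; apply: e0 => Kj; apply: nK; exists j.
  rewrite !big1_seq ?sqmod0 //.
    by move=> j /andP[_ /z ->]; rewrite sqmod0 mulr0.
  by move=> j /andP[_ /z ->]; rewrite mulr0.
have [hUg _ _] := hU.
have [U1 [U2 _]] := hUg.
set F := U t (e v).
have hF : L2 mu F := U1 t _ (he v).
have hFn : Rintegral mu setT (fun x => sqmod (F x)) = 1.
  by rewrite -Re_inner U2 // Re_inner.
have hinner r : sqmod (L2inner mu (e r) F) = alpha mu F e r ^+ 2 + beta mu F e r ^+ 2.
  rewrite /L2inner /sqmod /= /alpha /beta.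
  have -> : Rintegral mu setT (fun x => complex.Im (e r x * (F x)^*)) =
            - Rintegral mu setT (fun x => complex.Im (F x * (e r x)^*)).
    rewrite -mulN1r -RintegralZl //; last exact: int_Im.
    by apply: eq_Rintegral => x _; rewrite !Im_mulc; ring.
  rewrite sqrrN; congr (_ ^+ 2 + _).
  by apply: eq_Rintegral => x _; rewrite !Re_mulc; ring.
have hspan : closed_span mu e F.
  apply: H2 => //; split => // eps eps0.
  exists [:: v], (fun _ => 1).
  rewrite /L2norm.
  under eq_Rintegral do rewrite /fsub big_cons big_nil mul1r addr0 subrr sqmod0.
  by rewrite /Rintegral integral0 /= sqrtr0.
have bess : forall s, uniq s -> \sum_(j <- s) (alpha mu F e j ^+ 2 + beta mu F e j ^+ 2) <= 1.
  by move=> s us; rewrite -hFn; apply: bessel.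
apply/eqP; rewrite eq_le; apply/andP; split.
  apply: ge_ereal_sup => _ [X [finX _] <-].
  rewrite fsbig_finite //= sumEFin lee_fin.
  under eq_bigr do rewrite hinner.
  apply: bess; exact: finmap.fset_uniq.
apply/lee_subgt0Pr => eps eps0.
have [_ hsp] := hspan.
have [s [a hsa]] : exists (s : seq J) (a : J -> R[i]),
    L2norm mu (fsub F (fun x => \sum_(j <- s) a j * e j x)) < Num.sqrt eps.
  by apply: hsp; rewrite sqrtr_gt0.
pose a' j := a j *+ count_mem j s.
have hG x : fsub F (fun x => \sum_(j <- s) a j * e j x) x =
    F x - \sum_(j <- undup s) a' j * e j x.
  rewrite /fsub -(big_undup_iterop_count _ s); congr (_ - _); apply: eq_bigr => j _.
  rewrite Monoid.iteropE /a'; elim: (count_mem j s) => [|n IH] /=; first by rewrite mul0r.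
  by rewrite IH mulrS mulrDl.
have hlt : Rintegral mu setT (fun x => sqmod (F x - \sum_(j <- undup s) a' j * e j x)) < eps.
  move: hsa; rewrite /L2norm ltr_sqrt //.
  by under eq_Rintegral do rewrite hG.
have hap := approx hF he hsq horth (undup_uniq s) a'.
apply: esum_ge; exists [set` undup s]; first by rewrite /fsets /=; split => //; exact: finite_seq.
rewrite -fsbig_seq ?undup_uniq // sumEFin -EFinB lee_fin.
under eq_bigr do rewrite hinner.
move: hap hlt; rewrite hFn; lra.
Qed.
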